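(* Let $d \geq 0$ be an integer, $G$ a graph, and $\mathcal{Z}$ a family of $d$-clusters in $G$. Then there exists a family $\mathcal{Z}'$ of pairwise disjoint $(2d)$-clusters in $G$ such that $|\mathcal{Z}'| \leq |\mathcal{Z}|$ and $\bigcup \mathcal{Z} = \bigcup \mathcal{Z}'$.
   Context: For an integer $d\ge 0$, a $d$-cluster in a graph $G$ is a nonempty set $A \subseteq V(G)$ such that $G[A]$ is connected and has diameter at most $d$. *)

(* Defs.v *)
From mathcomp Require Import all_boot.
Set Implicit Arguments. Unset Strict Implicit. Unset Printing Implicit Defensive.

Definition simple_graph (T : finType) (e : rel T) : Prop :=
  symmetric e /\ irreflexive e.

Definition induced_rel (T : finType) (e : rel T) (A : {set T}) : rel T :=
  fun x y => [&& x \in A, y \in A & e x y].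

Definition induced_connected (T : finType) (e : rel T) (A : {set T}) : Prop :=
  forall x y, x \in A -> y \in A -> connect (induced_rel e A) x y.

(* dist_{G[A]}(x,y) <= k: there is a walk x = v0, v1, ..., vm = y in G[A]
   with m <= k edges (the walk is x :: p). *)
Definition induced_dist_le (T : finType) (e : rel T) (A : {set T})
    (x y : T) (k : nat) : Prop :=
  exists p : seq T, [/\ path (induced_rel e A) x p, last x p = y & size p <= k].

Definition induced_diam_le (T : finType) (e : rel T) (A : {set T}) (k : nat) : Prop :=
  forall x y, x \in A -> y \in A -> induced_dist_le e A x y k.

Definition cluster (T : finType) (e : rel T) (k : nat) (A : {set T}) : Prop :=
  [/\ A != set0, induced_connected e A & induced_diam_le e A k].

Definition pairwise_disjoint (T : finType) (F : {set {set T}}) : Prop :=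
  forall A B, A \in F -> B \in F -> A != B -> [disjoint A & B].

(* Main.v *)
Require Import Defs.
From Stdlib Require Import ClassicalEpsilon.
From mathcomp Require Import all_boot.
From mathcomp Require Import zify.
Set Implicit Arguments. Unset Strict Implicit. Unset Printing Implicit Defensive.

Definition Bc (P : Prop) : bool := if excluded_middle_informative P then true else false.
Lemma BcP (P : Prop) : reflect P (Bc P).
Proof. rewrite /Bc; case: excluded_middle_informative => h; by constructor. Qed.

Section Gen.
Variables (T : finType) (e : rel T).

Lemma induced_sub (A A' : {set T}) : A \subset A' ->
  subrel (induced_rel e A) (induced_rel e A').
Proof.
move=> /subsetP sAA' x y /and3P [xA yA exy]; apply/and3P; split=> //; exact: sAA'.
Qed.

Lemma induced_sym (A : {set T}) : symmetric e -> symmetric (induced_rel e A).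
Proof.
move=> es x y; rewrite /induced_rel es.
by case: (x \in A); case: (y \in A).
Qed.

Lemma path_rev_sym (r : rel T) : symmetric r -> forall x p, path r x p ->
  exists q, [/\ path r (last x p) q, last (last x p) q = x & size q = size p].
Proof.
move=> rs x p; elim: p x => [|z p IH] x /=.
  by move=> _; exists [::].
case/andP=> rxz pz; have [q [pq lq sq]] := IH z pz.
exists (rcons q x); rewrite rcons_path last_rcons size_rcons pq lq rs rxz sq.
by split.
Qed.

Lemma dl_cat (A : {set T}) x y z a b : induced_dist_le e A x y a ->
  induced_dist_le e A y z b -> induced_dist_le e A x z (a + b).
Proof.
case=> p [pp lp sp]; case=> q [pq lq sq]; exists (p ++ q).
rewrite cat_path last_cat lp pp pq lq size_cat; split => //; exact: leq_add.
Qed.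

Lemma dl_cons (A : {set T}) x y z k : induced_rel e A x y -> induced_dist_le e A y z k ->
  induced_dist_le e A x z k.+1.
Proof. by move=> rxy [q [pq lq sq]]; exists (y :: q); rewrite /= rxy pq lq. Qed.

Lemma dl_refl (A : {set T}) x : induced_dist_le e A x x 0.
Proof. by exists [::]. Qed.

Lemma dl0 (A : {set T}) x y : induced_dist_le e A x y 0 -> x = y.
Proof. by case=> [[|z p]] [_ <-]. Qed.

Lemma dl_in (A : {set T}) x y k : x \in A -> induced_dist_le e A x y k -> y \in A.
Proof.
move=> xA [p [pp <- _]]; elim: p x xA pp => [|z p IH] x xA //=.
by case/andP=> /and3P [_ zA _] pz; exact: IH.
Qed.

Lemma path_split (A : {set T}) c p : path (induced_rel e A) c p -> forall u, u \in c :: p ->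
  exists2 j, j <= size p &
    induced_dist_le e A c u j /\ induced_dist_le e A u (last c p) (size p - j).
Proof.
elim: p c => [|z p IH] c /=.
  move=> _ u; rewrite inE => /eqP ->; exists 0 => //; split; exact: dl_refl.
case/andP=> rcz pz u; rewrite in_cons => /orP [/eqP -> | uin].
  exists 0 => //; split; first exact: dl_refl.
  by exists (z :: p); rewrite /= rcz pz subn0.
have [j jle [h1 h2]] := IH z pz u uin.
exists j.+1 => //; split; first exact: dl_cons h1.
by rewrite subSS.
Qed.

Lemma path_restrict (A A' : {set T}) x p : path (induced_rel e A) x p ->
  (forall u, u \in x :: p -> u \in A') -> path (induced_rel e A') x p.
Proof.
elim: p x => [|z p IH] x //=.
case/andP=> /and3P [_ _ exz] pz h; apply/andP; split.
  rewrite /induced_rel exz (h x) ?(h z) //; by rewrite !inE eqxx ?orbT.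
apply: IH => // u uin; apply: h; by rewrite in_cons uin orbT.
Qed.

End Gen.

Section Main.
Variables (T : finType) (e : rel T) (U C : {set T}) (d : nat).

Definition Qp (v : T) n : Prop := exists c : T, exists k,
  [/\ c \in C, induced_dist_le e U c v k & n = k * #|T| + enum_rank c].
Definition Qb v n := Bc (Qp v n) || (n == d.+1 * #|T|).
Lemma exQ v : exists n, Qb v n.
Proof. by exists (d.+1 * #|T|); rewrite /Qb eqxx orbT. Qed.
Definition mm v := ex_minn (exQ v).
Definition Part (c : T) := [set v in U | mm v %% #|T| == enum_rank c].

Hypothesis esym : symmetric e.
Hypothesis CU : C \subset U.
Hypothesis Cov : forall v, v \in U -> exists2 c, c \in C & induced_dist_le e U c v d.

Lemma m_min v n : Qp v n -> mm v <= n.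
Proof.
move=> h; rewrite /mm; case: ex_minnP => k _ /(_ n); apply.
by rewrite /Qb; apply/orP; left; exact/BcP.
Qed.

Lemma rk_lt (c : T) : enum_rank c < #|T|.
Proof. exact: ltn_ord. Qed.

Lemma m_bound v : v \in U -> mm v < d.+1 * #|T|.
Proof.
move=> vU; have [c cC dcv] := Cov vU.
have hle : mm v <= d * #|T| + enum_rank c by apply: m_min; exists c, d.
have := rk_lt c; rewrite mulSn; lia.
Qed.

Lemma m_spec v : v \in U -> Qp v (mm v).
Proof.
move=> vU; have hb := m_bound vU.
move: hb; rewrite /mm; case: ex_minnP => k /orP [/BcP // | /eqP ->] _.
by rewrite ltnn.
Qed.

Lemma m_mod k (c : T) : (k * #|T| + enum_rank c) %% #|T| = enum_rank c.
Proof. by rewrite modnMDl modn_small // rk_lt. Qed.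

Lemma Part_spec c v : v \in Part c -> v \in U /\
  exists k, induced_dist_le e U c v k /\ mm v = k * #|T| + enum_rank c.
Proof.
rewrite inE => /andP [vU /eqP hm]; split => //.
have [c' [k [c'C dc' mv]]] := m_spec vU.
move: hm; rewrite mv m_mod => /val_inj /enum_rank_inj eqc.
by exists k; rewrite -eqc.
Qed.

Lemma c_in_Part c : c \in C -> c \in Part c.
Proof.
move=> cC; have cU : c \in U by apply: (subsetP CU).
rewrite inE cU /=.
have hle : mm c <= 0 * #|T| + enum_rank c by apply: m_min; exists c, 0; split => //; exact: dl_refl.
have [c' [[|k] [c'C dc' mv]]] := m_spec cU.
  by rewrite mv m_mod (dl0 dc').
move: hle; rewrite mv mulSn; have := rk_lt c; lia.
Qed.

Lemma Part_radius c v : c \in C -> v \in Part c -> exists p,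
  [/\ path (induced_rel e (Part c)) c p, last c p = v & size p <= d].
Proof.
move=> cC vP; have [vU [k [[p [pp lp sp]] mv]]] := Part_spec vP.
have kd : k <= d.
  have hb := m_bound vU.
  have : k * #|T| < d.+1 * #|T| by have := rk_lt c; lia.
  by rewrite ltn_pmul2r ?ltnS // (leq_ltn_trans _ (rk_lt c)).
exists p; split => //; last exact: leq_trans kd.
apply: (path_restrict pp) => u uin.
have [j jle [h1 h2]] := path_split pp uin.
have cU : c \in U by apply: (subsetP CU).
have uU := dl_in cU h1.
rewrite inE uU /=; apply/negPn/negP => hne.
have [c' [a [c'C dc' mu]]] := m_spec uU.
have hu : mm u <= j * #|T| + enum_rank c by apply: m_min; exists c, j.
have hneq : mm u != j * #|T| + enum_rank c.
  by apply: contra hne => /eqP ->; rewrite m_mod.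
have hlt : mm u < j * #|T| + enum_rank c by rewrite ltn_neqAle hneq hu.
have hv : mm v <= (a + (size p - j)) * #|T| + enum_rank c'.
  apply: m_min; exists c', (a + (size p - j)); split => //.
  by apply: dl_cat dc' _; rewrite -lp.
have e1 : (a + (size p - j)) * #|T| = a * #|T| + (size p - j) * #|T| by rewrite mulnDl.
have e2 : j * #|T| + (size p - j) * #|T| = size p * #|T| by rewrite -mulnDl subnKC.
have e3 : size p * #|T| <= k * #|T| by rewrite leq_mul2r sp orbT.
move: hv e1 e2 e3 hlt mu mv.
move: (a * #|T|) ((size p - j) * #|T|) (j * #|T|) (size p * #|T|) (k * #|T|).
lia.
Qed.

Lemma Part_cluster c : c \in C -> cluster e (2 * d) (Part c).
Proof.
move=> cC.
have diam : induced_diam_le e (Part c) (2 * d).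
  move=> x y xP yP.
  have [p [pp lp sp]] := Part_radius cC xP.
  have [q [pq lq sq]] := Part_radius cC yP.
  have [p' [pp' lp' sp']] := path_rev_sym (induced_sym _ esym) pp.
  rewrite mul2n -addnn; apply: (@dl_cat _ _ _ _ c); last by exists q.
  by exists p'; rewrite -lp; split => //; rewrite sp'.
split.
- by apply/set0Pn; exists c; exact: c_in_Part.
- move=> x y xP yP; have [p [pp lp _]] := diam x y xP yP.
  by apply/connectP; exists p.
- exact: diam.
Qed.

End Main.

Theorem lemma3p8 (T : finType) (e : rel T) (d : nat) (Z : {set {set T}}) :
  simple_graph e ->
  (forall A, A \in Z -> cluster e d A) ->
  exists Z' : {set {set T}},
    [/\ (forall A, A \in Z' -> cluster e (2 * d) A),
        pairwise_disjoint Z',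
        #|Z'| <= #|Z|
      & \bigcup_(A in Z) A = \bigcup_(A in Z') A].
Proof.
move=> [esym _] HZ.
case: (pickP (@predT T)) => [x0 _ | T0]; last first.
  exists Z; split => //.
  - by move=> A /HZ [ne _ _]; case/set0Pn: ne => x _; have := T0 x.
  - by move=> A B _ _ _; apply/pred0P => x; have := T0 x.
pose ctr := fun A : {set T} => odflt x0 [pick x in A].
pose U := \bigcup_(A in Z) A.
pose C := ctr @: Z.
have ctrA : forall A, A \in Z -> ctr A \in A.
  move=> A /HZ [ne _ _]; rewrite /ctr; case: pickP => [x // | h].
  by case/set0Pn: ne => y; rewrite h.
have CU : C \subset U.
  apply/subsetP => c /imsetP [A AZ ->]; apply/bigcupP; exists A => //; exact: ctrA.
have Cov : forall v, v \in U -> exists2 c, c \in C & induced_dist_le e U c v d.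
  move=> v /bigcupP [A AZ vA]; exists (ctr A); first exact: imset_f.
  have [_ _ dA] := HZ A AZ; have [p [pp lp sp]] := dA _ _ (ctrA A AZ) vA.
  exists p; split => //; apply: sub_path pp; apply: induced_sub.
  by apply/subsetP => y yA; apply/bigcupP; exists A.
exists (Part e U C d @: C); split.
- by move=> A /imsetP [c cC ->]; exact: (Part_cluster esym CU Cov cC).
- move=> A B /imsetP [c cC ->] /imsetP [c' c'C ->] hne.
  apply/pred0P => v /=; apply/negP => /andP [v1 v2]; move/negP: hne; apply.
  move: v1 v2; rewrite !inE => /andP [_ /eqP h1] /andP [_ /eqP h2].
  by move: h1; rewrite h2 => /val_inj /enum_rank_inj ->.
- exact: leq_trans (leq_imset_card _ _) (leq_imset_card _ _).
- apply/setP => v; apply/idP/idP.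
  + move=> vU; have [c' [k [c'C _ mv]]] := m_spec CU Cov vU.
    apply/bigcupP; exists (Part e U C d c'); first exact: imset_f.
    by rewrite inE vU mv m_mod eqxx.
  + case/bigcupP => A /imsetP [c cC ->]; rewrite inE => /andP [vU _]; exact: vU.
Qed.
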